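(* In the setting described in the context, the convex program $$\min_{q\in\mathbb R^{\mathcal V}}\ \sum_{v\in\mathcal V}-p_v\log q_v\quad\text{s.t.}\quad q\ge\mathbf 0,\ Mq\le\mathbf 1$$ has a minimizer $q^*$, and there is a soft classifier $h^*$ with $q^{h^*}_v\ge q^*_v$ for all $v\in\mathcal V$ such that $$\mathbb E_{(x,y)\sim P}\big[\tilde\ell(h^*,(x,y))\big]=\sum_{v\in\mathcal V}-p_v\log q^*_v\le \mathbb E_{(x,y)\sim P}\big[\tilde\ell(h,(x,y))\big]$$ for every soft classifier $h$.
   Context: Let $\mathcal X$ be a set and $\mathcal Y=\{-1,1\}$. Let $P$ be a probability distribution on $\mathcal X\times\mathcal Y$ with finite support $\mathcal V$, and write $p_v=P(\{v\})>0$ for $v\in\mathcal V$. Let $N$ assign to each $x\in\mathcal X$ a nonempty set $N(x)\subseteq\mathcal X$; for $v=(x,y)$ write $N(v)=N(x)$. A soft classifier is any function $h:\mathcal X\to[0,1]^{\mathcal Y}$ with $h(x)_1+h(x)_{-1}=1$ for all $x$. The conflict graph is the bipartite graph with vertex set $\mathcal V$, parts $\mathcal V_c=\mathcal V\cap(\mathcal X\times\{c\})$ for $c\in\{1,-1\}$, and edge set $\mathcal E$ consisting of the pairs $(u,v)\in\mathcal V_1\times\mathcal V_{-1}$ with $N(u)\cap N(v)\neq\emptyset$. Let $E\in\mathbb R^{\mathcal E\times\mathcal V}$ be its edge incidence matrix ($E_{e,w}=1$ if $w$ is an endpoint of $e$, else $0$), and $M=\begin{pmatrix}E\\ I\end{pmatrix}\in\mathbb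 R^{(\mathcal E\sqcup\mathcal V)\times\mathcal V}$. For a soft classifier $h$ and $v=(x,y)\in\mathcal V$, $q^h_v=\inf_{\tilde x\in N(x)}h(\tilde x)_y$. The robust cross-entropy loss of $h$ at $(x,y)$ is $\tilde\ell(h,(x,y))=\sup_{\tilde x\in N(x)}\big(-\log h(\tilde x)_y\big)$, with $-\log 0=+\infty$; $\log$ of $0$ in the objective is $-\infty$. *)

(* Defs.v *)
From HB Require Import structures.
From mathcomp Require Import all_boot all_order all_algebra.
From mathcomp Require Import all_classical all_reals.
From mathcomp Require Import ereal exp.
Set Implicit Arguments. Unset Strict Implicit. Unset Printing Implicit Defensive.
Import Order.TTheory GRing.Theory Num.Theory.
Local Open Scope ring_scope.
Local Open Scope classical_set_scope.

(* Labels: Y = {-1,1} encoded as bool, true = 1, false = -1. *)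

(* -log with the convention -log 0 = +oo (argument in [0,1] in all uses;
   nonpositive arguments are sent to +oo). *)
Definition nlog {R : realType} (t : R) : \bar R :=
  if t <= 0 then +oo%E else (- ln t)%:E.

Definition soft_classifier {R : realType} {X : Type} (h : X -> bool -> R) : Prop :=
  forall x, (forall b, 0 <= h x b <= 1) /\ h x true + h x false = 1.

Definition qh {R : realType} {X : Type} (N : X -> set X) (h : X -> bool -> R)
  (v : X * bool) : R :=
  inf [set h xt v.2 | xt in N v.1].

Definition robust_loss {R : realType} {X : Type} (N : X -> set X)
  (h : X -> bool -> R) (v : X * bool) : \bar R :=
  ereal_sup [set nlog (h xt v.2) | xt in N v.1].

(* Expectation over P with finite support V (embedded by emb), weights p *)
Definition expect {R : realType} {V : finType} (p : V -> R) (f : V -> \bar R) : \bar R :=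
  (\sum_(v : V) (p v)%:E * f v)%E.

Definition conflict_edge {X : Type} {V : finType} (emb : V -> X * bool)
  (N : X -> set X) (u v : V) : Prop :=
  (emb u).2 = true /\ (emb v).2 = false /\ (N (emb u).1 `&` N (emb v).1) !=set0.

(* feasibility: q >= 0 and M q <= 1, with M = [E; I]: rows of E give
   q_u + q_v <= 1 for every edge (u,v), rows of I give q_v <= 1 *)
Definition feasible {R : realType} {X : Type} {V : finType} (emb : V -> X * bool)
  (N : X -> set X) (q : V -> R) : Prop :=
  (forall v, 0 <= q v) /\
  (forall u v, conflict_edge emb N u v -> q u + q v <= 1) /\
  (forall v, q v <= 1).

Definition objective {R : realType} {V : finType} (p : V -> R) (q : V -> R) : \bar R :=
  expect p (fun v => nlog (q v)).

(* Main.v *)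
Require Import Defs.
From HB Require Import structures.
From mathcomp Require Import all_boot all_order all_algebra.
From mathcomp Require Import all_classical all_reals.
From mathcomp Require Import ereal exp.
From mathcomp Require Import all_analysis.
Import Order.TTheory GRing.Theory Num.Theory.
Import numFieldNormedType.Exports.
Local Open Scope ring_scope.
Local Open Scope classical_set_scope.

Lemma nlog_anti (R : realType) (a b : R) : a <= b -> (nlog b <= nlog a)%E.
Proof.
move=> ab; rewrite /nlog.
have [a0|a0] := leP a 0; first by rewrite leey.
have b0 : ~~ (b <= 0) by rewrite -ltNge; exact: lt_le_trans ab.
rewrite (negbTE b0) lee_fin lerN2 ler_ln ?posrE //.
by rewrite ltNge.
Qed.

Lemma nlog_ge0 (R : realType) (a : R) : a <= 1 -> (0 <= nlog a)%E.
Proof.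
move=> a1; rewrite /nlog; case: ifP => // _.
by rewrite lee_fin oppr_ge0 ln_le0.
Qed.

Lemma expect_le (R : realType) (V : finType) (p : V -> R) (f g : V -> \bar R) :
  (forall v, 0 <= p v) -> (forall v, (f v <= g v)%E) -> (expect p f <= expect p g)%E.
Proof.
move=> p0 fg; rewrite /expect; apply: lee_sum => v _.
by apply: lee_wpmul2l; rewrite ?lee_fin.
Qed.

Lemma qh_lb (R : realType) (X : Type) (N : X -> set X) (h : X -> bool -> R) v xt :
  soft_classifier h -> N v.1 xt -> qh N h v <= h xt v.2.
Proof.
move=> sh Nx; apply: ge_inf; last by exists xt.
exists 0 => _ [y _ <-]; have [/(_ v.2) /andP[] ] := sh y; done.
Qed.

Lemma qh_ge0 (R : realType) (X : Type) (N : X -> set X) (h : X -> bool -> R) v :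
  soft_classifier h -> N v.1 !=set0 -> 0 <= qh N h v.
Proof.
move=> sh [x Nx]; apply: lb_le_inf; first by exists (h x v.2), x.
move=> _ [y _ <-]; have [/(_ v.2) /andP[] ] := sh y; done.
Qed.

Lemma robust_le (R : realType) (X : Type) (N : X -> set X) (h : X -> bool -> R) v :
  soft_classifier h -> (robust_loss N h v <= nlog (qh N h v))%E.
Proof.
move=> sh; apply: ge_ereal_sup => _ [xt Nx <-].
by apply: nlog_anti; apply: qh_lb.
Qed.

Lemma robust_ge (R : realType) (X : Type) (N : X -> set X) (h : X -> bool -> R) v :
  soft_classifier h -> N v.1 !=set0 -> (nlog (qh N h v) <= robust_loss N h v)%E.
Proof.
move=> sh [x0 Nx0].
set s := robust_loss N h v.
have sub : forall xt, N v.1 xt -> (nlog (h xt v.2) <= s)%E.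
  by move=> xt Nx; apply: ereal_sup_ubound; exists xt.
have s0 : (0 <= s)%E.
  apply: le_trans (sub _ Nx0); apply: nlog_ge0.
  by have [/(_ v.2) /andP[] ] := sh x0.
move: s0 sub; case: s => [a| |] s0 sub; last by [].
- have lbS : forall xt, N v.1 xt -> expR (- a) <= h xt v.2.
    move=> xt Nx; have := sub _ Nx; rewrite /nlog.
    case: ifP => // hpos; rewrite lee_fin lerNl => la.
    have hp : 0 < h xt v.2 by rewrite ltNge hpos.
    by rewrite -(lnK hp) ?posrE // ler_expR.
  have mge : expR (- a) <= qh N h v.
    apply: lb_le_inf; first by exists (h x0 v.2), x0.
    by move=> _ [y Ny <-]; apply: lbS.
  have mpos : 0 < qh N h v by exact: lt_le_trans (expR_gt0 _) mge.
  rewrite /nlog ifF; last by rewrite leNgt mpos.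
  rewrite lee_fin lerNl.
  by rewrite -[X in X <= _]expRK ler_ln ?posrE ?expR_gt0.
- by rewrite leey.
Qed.

Lemma qh_feasible (R : realType) (X : Type) (V : finType) (emb : V -> X * bool)
  (N : X -> set X) (h : X -> bool -> R) :
  soft_classifier h -> (forall x, N x !=set0) ->
  feasible emb N (fun v => qh N h (emb v)).
Proof.
move=> sh Nne; split; [|split].
- by move=> v; apply: qh_ge0.
- move=> u v [u1 [v1 [xt [Nu Nv]]]].
  have := @qh_lb _ _ _ _ _ _ sh Nu; have := @qh_lb _ _ _ _ _ _ sh Nv; rewrite u1 v1 => a b.
  have [_ <-] := sh xt; exact: lerD.
- move=> v; have [x Nx] := Nne (emb v).1.
  apply: le_trans (@qh_lb _ _ _ _ _ _ sh Nx) _.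
  by have [/(_ (emb v).2) /andP[] ] := sh x.
Qed.

Definition hmax (R : realType) (X : Type) (V : finType) (emb : V -> X * bool)
  (N : X -> set X) (q : V -> R) (x : X) : R :=
  \big[Num.max/0]_(u | (emb u).2 && `[< N (emb u).1 x >]) q u.

Arguments hmax {R X V} emb N q x.

Definition hdef (R : realType) (X : Type) (V : finType) (emb : V -> X * bool)
  (N : X -> set X) (q : V -> R) (x : X) (b : bool) : R :=
  if b then hmax emb N q x else 1 - hmax emb N q x.

Arguments hdef {R X V} emb N q x b.

Lemma hdef_soft (R : realType) (X : Type) (V : finType) (emb : V -> X * bool)
  (N : X -> set X) (q : V -> R) :
  feasible emb N q -> soft_classifier (hdef emb N q).
Proof.
move=> [q0 [qe q1]] x.
have h0 : 0 <= hmax emb N q x.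
  rewrite /hmax; elim/big_ind: _ => // a b a0 b0.
  by rewrite le_max a0.
have h1 : hmax emb N q x <= 1 by apply: bigmax_le.
split; last by rewrite /hdef addrC subrK.
by case; rewrite /hdef ?h0 ?h1 // subr_ge0 h1 /= lerBlDr lerDl.
Qed.

Lemma hdef_qh (R : realType) (X : Type) (V : finType) (emb : V -> X * bool)
  (N : X -> set X) (q : V -> R) :
  feasible emb N q -> (forall x, N x !=set0) ->
  forall v, q v <= qh N (hdef emb N q) (emb v).
Proof.
move=> [q0 [qe q1]] Nne v.
have [x0 Nx0] := Nne (emb v).1.
apply: lb_le_inf; first by exists (hdef emb N q x0 (emb v).2), x0.
move=> _ [xt Nxt <-]; rewrite /hdef.
case ev: (emb v).2.
- apply: (le_bigmax_cond _ (P := fun u => (emb u).2 && `[< N (emb u).1 xt >])).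
  by rewrite ev /=; apply/asboolP.
- rewrite lerBrDr -lerBrDl; apply: bigmax_le; first by rewrite subr_ge0.
  move=> u /andP[eu /asboolP Nu].
  rewrite lerBrDl addrC; apply: qe.
  by split; [|split; [|exists xt]].
Qed.

Lemma obj_lb (R : realType) (V : finType) (p : V -> R) (q : V -> R) (L : R) v :
  (forall v, 0 < p v) -> (forall v, q v <= 1) ->
  (objective p q <= L%:E)%E -> expR (- L / p v) <= q v.
Proof.
move=> p_pos q1 oL.
have term : ((p v)%:E * nlog (q v) <= L%:E)%E.
  apply: le_trans oL; rewrite /objective /expect (bigD1 v) //=.
  apply: leeDl; apply: sume_ge0 => u _.
  by apply: mule_ge0; [rewrite lee_fin ltW|apply: nlog_ge0].
move: term; rewrite /nlog; case: ifP => [_|qpos].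
  by rewrite gt0_muley ?lte_fin // leye_eq.
have qp : 0 < q v by rewrite ltNge qpos.
rewrite -EFinM lee_fin => le1.
rewrite -(lnK qp) ?posrE // ler_expR.
by rewrite mulNr lerNl ler_pdivlMr // mulrC.
Qed.

Lemma closed_pair (R : realType) n (a b : 'I_n) :
  closed [set w : 'rV[R]_n | w ord0 a + w ord0 b <= 1].
Proof.
have -> : [set w : 'rV[R]_n | w ord0 a + w ord0 b <= 1] =
  (fun w : 'rV[R]_n => w ord0 a + w ord0 b) @^-1` [set x : R | x <= 1] by [].
apply: (proj1 (continuous_closedP _)); last exact: closed_le.
have ca := @coord_continuous R 1 n ord0 a.
have cb := @coord_continuous R 1 n ord0 b.
move=> w; exact: (cvgD (ca w) (cb w)).
Qed.

Lemma exists_min (R : realType) (X : Type) (V : finType) (emb : V -> X * bool)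
  (N : X -> set X) (p : V -> R) :
  (forall v, 0 < p v) ->
  exists qs : V -> R, feasible emb N qs /\
    forall q, feasible emb N q -> (objective p qs <= objective p q)%E.
Proof.
move=> p_pos.
pose n := #|V|.
pose toV (w : 'rV[R]_n) : V -> R := fun v => w ord0 (enum_rank v).
pose ofV (q : V -> R) : 'rV[R]_n := \row_i q (enum_val i).
have toofV q : toV (ofV q) = q by apply/funext => v; rewrite /toV /ofV mxE enum_rankK.
pose L := \sum_v p v * ln (2:R).
pose del v := expR (- L / p v).
pose box := [set w : 'rV[R]_n | forall i, `[del (enum_val i), 1]%classic (w ord0 i)].
pose E := [set w : 'rV[R]_n | forall u v, conflict_edge emb N u v -> toV w u + toV w v <= 1].
pose A := box `&` E.
have cA : compact A.
  have cbox : compact box.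
    apply: (@rV_compact _ n (fun i => `[del (enum_val i), 1]%classic)) => i.
    exact: segment_compact.
  have := (@compact_closedI _ box E cbox); apply.
  have -> : E = \bigcap_(uv in [set uv : V * V | conflict_edge emb N uv.1 uv.2])
      [set w : 'rV[R]_n | w ord0 (enum_rank uv.1) + w ord0 (enum_rank uv.2) <= 1].
    apply/seteqP; split => w /=.
      by move=> Ew [u v] /= ce; exact: Ew.
    by move=> Ew u v ce; exact: (Ew (u, v) ce).
  by apply: closed_bigI => uv _; exact: closed_pair.
pose F (w : 'rV[R]_n) := \sum_v p v * (- ln (toV w v)).
have delpos v : 0 < del v by exact: expR_gt0.
have Fc : {within A, continuous F}.
  apply: continuous_in_subspaceT => w /set_mem [Bw Ew].
  have wpos v : 0 < toV w v.
    have := Bw (enum_rank v); rewrite /= in_itv /= enum_rankK => /andP[+ _].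
    exact: lt_le_trans (delpos v).
  have ct v : {for w, continuous (fun w : 'rV[R]_n => p v * - ln (toV w v))}.
    have c1 := @coord_continuous R 1 n ord0 (enum_rank v) w.
    have c2 := continuous_ln (wpos v).
    have c3 := continuous_comp c1 c2.
    have c4 := continuousN c3.
    have c5 := continuousM (@cst_continuous _ _ (p v) w) c4.
    exact: c5.
  rewrite /F.
  have := (@cvg_big R V +%R 0 xpredT add_continuous _ (nbhs w) (index_enum V) (fun v w => p v * - ln (toV w v)) (fun v => p v * - ln (toV w v)) _).
  apply.
  move=> v _; exact: ct.
have ln2 : 0 <= ln (2:R) by apply: ln_ge0; rewrite ler1n.
have Lge v : p v * ln 2 <= L.
  rewrite /L (bigD1 v) //= lerDl; apply: sumr_ge0 => u _.
  by apply: mulr_ge0 => //; exact: ltW.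
have e2 : (2:R)^-1 = expR (- ln 2) by rewrite expRN lnK // posrE.
have delle v : del v <= 2^-1.
  by rewrite e2 ler_expR mulNr lerN2 ler_pdivlMr // mulrC.
pose half : V -> R := fun=> 2^-1.
have inA w : (forall v, del v <= toV w v <= 1) -> feasible emb N (toV w) -> A w.
  move=> hb [_ [he _]]; split; last exact: he.
  move=> i; rewrite /= in_itv /=.
  by have := hb (enum_val i); rewrite /toV enum_valK.
have h1 : (2:R)^-1 <= 1 by rewrite invf_le1 // ler1n.
have hA : A (ofV half).
  apply: inA => [v|]; rewrite toofV /half; first by rewrite delle h1.
  split; [move=> v; rewrite invr_ge0 ler0n // | split => // u v _].
  by rewrite -mulr2n -[_ *+ 2]mulr_natr mulVf.
have A0 : A !=set0 by exists (ofV half).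
have [c /set_mem cinA cmin] := compact_EVT_min A0 cA Fc.
have Apos w v : A w -> 0 < toV w v.
  move=> [Bw _]; have := Bw (enum_rank v); rewrite /= in_itv /= enum_rankK => /andP[+ _].
  exact: lt_le_trans (delpos v).
have objF w : A w -> objective p (toV w) = (F w)%:E.
  move=> Aw; rewrite /objective /expect /F -sumEFin; apply: eq_bigr => v _.
  by rewrite /nlog ifF ?leNgt ?Apos // EFinM.
have Fhalf : F (ofV half) = L.
  rewrite /F toofV /half /L; apply: eq_bigr => v _.
  by rewrite lnV ?posrE // opprK.
exists (toV c); split.
  have [Bc Ec] := cinA; split; [|split; [exact: Ec|]] => v;
    have := Bc (enum_rank v); rewrite /= in_itv /= enum_rankK => /andP[a b] //.
  exact: le_trans (ltW (delpos v)) a.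
move=> q fq; have [q0 [qe q1]] := fq.
rewrite objF //.
have [oL|oL] := leP (objective p q) L%:E.
  have Aq : A (ofV q).
    apply: inA; rewrite toofV // => v.
    by rewrite q1 andbT; apply: obj_lb.
  rewrite -(toofV q) objF // lee_fin; apply: cmin; exact: mem_set.
apply: le_trans (ltW oL); rewrite lee_fin -Fhalf; apply: cmin; exact: mem_set.
Qed.

Theorem theorem1 (R : realType) (X : Type) (V : finType)
  (emb : V -> X * bool) (p : V -> R) (N : X -> set X)
  (emb_inj : injective emb)
  (p_pos : forall v, 0 < p v)
  (p_sum : \sum_(v : V) p v = 1)
  (N_ne : forall x, N x !=set0) :
  exists qstar : V -> R,
    feasible emb N qstar /\
    (forall q : V -> R, feasible emb N q -> (objective p qstar <= objective p q)%E) /\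
    exists hstar : X -> bool -> R,
      soft_classifier hstar /\
      (forall v, qstar v <= qh N hstar (emb v)) /\
      expect p (fun v => robust_loss N hstar (emb v)) = objective p qstar /\
      (forall h : X -> bool -> R, soft_classifier h ->
         (objective p qstar <= expect p (fun v => robust_loss N h (emb v)))%E).
Proof.
have [qs [fqs qmin]] := @exists_min _ _ _ emb N p p_pos.
have p0 v : 0 <= p v by exact: ltW.
have lower : forall h : X -> bool -> R, soft_classifier h ->
    (objective p qs <= expect p (fun v => robust_loss N h (emb v)))%E.
  move=> h sh.
  apply: le_trans (qmin _ (@qh_feasible _ _ _ emb N h sh N_ne)) _.
  apply: expect_le => // v; exact: (@robust_ge _ _ N h (emb v) sh (N_ne _)).
exists qs; split => //; split => //.
exists (hdef emb N qs).
have sh := @hdef_soft _ _ _ emb N qs fqs.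
have qle := @hdef_qh _ _ _ emb N qs fqs N_ne.
split => //; split => //; split => //.
apply/le_anti/andP; split; last exact: lower.
apply: expect_le => // v.
apply: le_trans (@robust_le _ _ N _ (emb v) sh) _.
exact: nlog_anti.
Qed.
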